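(* Let $P$ be any product rule with $P$-product $*$. Then $\overline{f*g}=\overline f*\overline g$ holds for all series $f,g$ if and only if for all series $f,g$ and all $b\in\Sigma$, \[\delta^R_b(f*g)=[\![P]\!]_{[x\mapsto f,\ \dot x\mapsto\delta^R_bf,\ y\mapsto g,\ \dot y\mapsto\delta^R_bg]}.\]
   Context: Let $\Sigma$ be a finite alphabet, $\Sigma^*$ the finite words with empty word $\varepsilon$. A series is $f:\Sigma^*\to\mathbb Q$, $f_w=f(w)$; series form a $\mathbb Q$-vector space under pointwise operations. For $a\in\Sigma$ the left derivative $\delta_af$ is $w\mapsto f(aw)$ and the right derivative $\delta^R_af$ is $w\mapsto f(wa)$. The reversal $\overline f$ of $f$ is $w\mapsto f(\overline w)$, where $\overline w$ is the mirror image of $w$. Terms over $X$: generated by $u,v::=x\mid 0\mid c\cdot u\mid u+v\mid u*v$. A product rule is a term $P$ over $\{x,\dot x,y,\dot y\}$. The $P$-product $*$ and semantics $[\![u]\!]_\varrho$ of terms under valuations $\varrho:X\to$ series are the unique pair with $(f*g)_\varepsilon=f_\varepsilon g_\varepsilon$, $\delta_a(f*g)=[\![P]\!]_{[x\mapsto f,\dot x\mapsto\delta_af,y\mapsto g,\dot y\mapsto\delta_ag]}$, and $[\![\cdot]\!]_\varrho$ interpreting variables via $\varrho$ and constructors by zero, scalar multiplication, addition, $*$. *)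

(* Defs.v *)
From mathcomp Require Import all_boot all_order all_algebra.
Set Implicit Arguments. Unset Strict Implicit. Unset Printing Implicit Defensive.
Import GRing.Theory Num.Theory.
Local Open Scope ring_scope.

Definition series (Sigma : finType) := seq Sigma -> rat.

Section Series.
Variable Sigma : finType.

Definition ldelta (a : Sigma) (f : series Sigma) : series Sigma :=
  fun w => f (a :: w).
Definition rdelta (a : Sigma) (f : series Sigma) : series Sigma :=
  fun w => f (rcons w a).
Definition srev (f : series Sigma) : series Sigma := fun w => f (rev w).

Definition szero : series Sigma := fun _ => 0.
Definition sscale (c : rat) (f : series Sigma) : series Sigma := fun w => c * f w.
Definition sadd (f g : series Sigma) : series Sigma := fun w => f w + g w.
End Series.

Inductive term (X : Type) : Type :=
| TVar of X
| TZero
| TScale of rat & term X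
| TAdd of term X & term X
| TMul of term X & term X.

Fixpoint sem (Sigma : finType) (X : Type)
    (mul : series Sigma -> series Sigma -> series Sigma)
    (rho : X -> series Sigma) (t : term X) : series Sigma :=
  match t with
  | TVar x => rho x
  | TZero => @szero Sigma
  | TScale c u => sscale c (sem mul rho u)
  | TAdd u v => sadd (sem mul rho u) (sem mul rho v)
  | TMul u v => mul (sem mul rho u) (sem mul rho v)
  end.

Inductive pvar : Type := Vx | Vxd | Vy | Vyd.

Definition product_rule := term pvar.

Definition val4 (Sigma : finType) (f f' g g' : series Sigma) : pvar -> series Sigma :=
  fun v => match v with Vx => f | Vxd => f' | Vy => g | Vyd => g' end.

(* Approximations: [pmul_k P k f g] is correct on words of length <= k. *)
Fixpoint pmul_k (Sigma : finType) (P : product_rule) (k : nat)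
    (f g : series Sigma) : series Sigma :=
  fun w =>
    match w with
    | [::] => f [::] * g [::]
    | a :: w' =>
        match k with
        | 0%N => 0
        | k'.+1 =>
            sem (pmul_k P k') (val4 f (ldelta a f) g (ldelta a g)) P w'
        end
    end.

(* The P-product: the unique operation with (f*g)_eps = f_eps g_eps and
   delta_a (f*g) = [[P]]_[x|->f, xdot|->delta_a f, y|->g, ydot|->delta_a g]. *)
Definition pmul (Sigma : finType) (P : product_rule) (f g : series Sigma)
  : series Sigma := fun w => pmul_k P (size w) f g w.

(* Main.v *)
Require Import Defs.
From mathcomp Require Import all_boot all_order all_algebra.
From Stdlib Require Import FunctionalExtensionality.
Set Implicit Arguments. Unset Strict Implicit. Unset Printing Implicit Defensive.
Import GRing.Theory Num.Theory.
Local Open Scope ring_scope.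

Section Aux.
Variable Sigma : finType.
Variable P : product_rule.

Definition eqn n (f g : series Sigma) := forall w, (size w <= n)%N -> f w = g w.

Lemma eqn_mono m n f g : (m <= n)%N -> eqn n f g -> eqn m f g.
Proof. by move=> hmn H w hw; apply: H; apply: leq_trans hw hmn. Qed.

Lemma sem_ext n (mul1 mul2 : series Sigma -> series Sigma -> series Sigma)
  (rho1 rho2 : pvar -> series Sigma) (t : term pvar) :
 (forall u1 u2 v1 v2, eqn n u1 u2 -> eqn n v1 v2 -> eqn n (mul1 u1 v1) (mul2 u2 v2)) ->
 (forall x, eqn n (rho1 x) (rho2 x)) -> eqn n (sem mul1 rho1 t) (sem mul2 rho2 t).
Proof.
move=> Hm Hr; elim: t => [x||c u IH|u IHu v IHv|u IHu v IHv] /=.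
- exact: Hr.
- by [].
- by move=> w hw; rewrite /sscale IH.
- by move=> w hw; rewrite /sadd IHu ?IHv.
- exact: Hm.
Qed.

Lemma pmul_k_nil k (f g : series Sigma) : pmul_k P k f g [::] = f [::] * g [::].
Proof. by case: k. Qed.

Lemma causal n : forall k1 k2, (n <= k1)%N -> (n <= k2)%N ->
  forall f1 f2 g1 g2, eqn n f1 f2 -> eqn n g1 g2 ->
  eqn n (pmul_k P k1 f1 g1) (pmul_k P k2 f2 g2).
Proof.
elim: n => [|n IH] k1 k2 h1 h2 f1 f2 g1 g2 Hf Hg [|a w] Hw.
- by rewrite !pmul_k_nil Hf ?Hg.
- by [].
- by rewrite !pmul_k_nil Hf ?Hg.
- case: k1 h1 => // k1 h1; case: k2 h2 => // k2 h2 /=.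
  apply: (sem_ext (n:=n)) => //.
  + by move=> u1 u2 v1 v2; apply: IH.
  + case => w' hw' /=; [apply: Hf | apply: Hf | apply: Hg | apply: Hg] => //; exact: leqW.

Qed.

Lemma pmul_causal n (f1 f2 g1 g2 : series Sigma) : eqn n f1 f2 -> eqn n g1 g2 ->
  eqn n (pmul P f1 g1) (pmul P f2 g2).
Proof.
move=> Hf Hg w hw; rewrite /pmul; apply: (causal (n:=size w)) => //;
  exact: eqn_mono hw _.
Qed.

Lemma pmul_cons (f g : series Sigma) a w :
  pmul P f g (a :: w) = sem (pmul P) (val4 f (ldelta a f) g (ldelta a g)) P w.
Proof.
rewrite /pmul /=; apply: (sem_ext (n:=size w)) => //.
move=> u1 u2 v1 v2 Hu Hv w' hw'.
apply: (causal (n:=size w')) => //; exact: eqn_mono hw' _.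
Qed.

Lemma ldelta_pmul (f g : series Sigma) a :
  ldelta a (pmul P f g) = sem (pmul P) (val4 f (ldelta a f) g (ldelta a g)) P.
Proof. apply: functional_extensionality => w; exact: pmul_cons. Qed.

Lemma srevK (f : series Sigma) : srev (srev f) = f.
Proof. by apply: functional_extensionality => w; rewrite /srev revK. Qed.

Lemma rdelta_srev b (h : series Sigma) : rdelta b (srev h) = srev (ldelta b h).
Proof. by apply: functional_extensionality => w; rewrite /srev /rdelta /ldelta rev_rcons. Qed.

Lemma srev_rdelta b (h : series Sigma) : srev (rdelta b h) = ldelta b (srev h).
Proof. by apply: functional_extensionality => w; rewrite /srev /rdelta /ldelta rev_cons. Qed.

Lemma srev_sem (mul : series Sigma -> series Sigma -> series Sigma) rho (t : term pvar) :
  srev (sem mul rho t) =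
  sem (fun u v => srev (mul (srev u) (srev v))) (fun x => srev (rho x)) t.
Proof.
elim: t => [x||c u IH|u IHu v IHv|u IHu v IHv] //=.
- by rewrite -IH.
- by rewrite -IHu -IHv.
- by rewrite -IHu -IHv !srevK.
Qed.

Lemma srev_val4 (f f' g g' : series Sigma) :
  (fun x => srev (val4 f f' g g' x)) = val4 (srev f) (srev f') (srev g) (srev g').
Proof. by apply: functional_extensionality; case. Qed.

End Aux.

Theorem mainTheorem15 (Sigma : finType) (P : product_rule) :
  (forall f g : series Sigma,
     forall w, srev (pmul P f g) w = pmul P (srev f) (srev g) w) <->
  (forall (f g : series Sigma) (b : Sigma),
     forall w, rdelta b (pmul P f g) w =
       sem (pmul P) (val4 f (rdelta b f) g (rdelta b g)) P w).
Proof.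
split.
- move=> H f g b w.
  have Hpm : forall u v : series Sigma, pmul P u v = srev (pmul P (srev u) (srev v)).
    move=> u v; apply: functional_extensionality => w'.
    by rewrite H !srevK.
  have Hst : (fun u v : series Sigma => srev (pmul P (srev u) (srev v))) = pmul P.
    apply: (@functional_extensionality (series Sigma)) => u.
    apply: (@functional_extensionality (series Sigma)) => v.
    by rewrite -Hpm.
  rewrite Hpm rdelta_srev ldelta_pmul srev_sem srev_val4 Hst !srevK.
  by rewrite -!rdelta_srev !srevK.
- move=> H f g w.
  suff: forall n (f g : series Sigma) w, (size w <= n)%N ->
      srev (pmul P f g) w = pmul P (srev f) (srev g) w by move/(_ (size w)); apply.
  elim=> [|n IH] {}f {}g [|a {}w] Hw //.
  have -> : srev (pmul P f g) (a :: w) = srev (rdelta a (pmul P f g)) w.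
    by rewrite /srev /rdelta rev_cons.
  have -> : rdelta a (pmul P f g) = sem (pmul P) (val4 f (rdelta a f) g (rdelta a g)) P.
    by apply: functional_extensionality => w'; apply: H.
  rewrite srev_sem srev_val4 !srev_rdelta pmul_cons.
  apply: (sem_ext (n:=n)) => //.
  + move=> u1 u2 v1 v2 Hu Hv w' hw'.
    rewrite IH // !srevK; exact: (pmul_causal P Hu Hv hw').
Qed.
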